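(* Let $V$ be a vector space over $\mathbb{F}_q$ with $q$ odd and a perfect square, and let $s_1,\dots,s_5$ be transvections in $\mathrm{SL}(V)$ such that $(s_1,s_2)$ and $(s_2,s_3)$ are two-way directed edges and $[s_3,s_4]$, $[s_4,s_5]$, $[s_5,s_3]$ are directed edges of $\Gamma(\mathcal T)$. Assume that $(s_1,s_3)$ is not a two-way directed edge. If $[s_1,s_3]$ is a one-way edge, then the triangle $(s_1,s_3,s_2)$ is non-unitary. If $[s_3,s_1]$ is a one-way edge, then the triangle $(s_1,s_2,s_3)$ is non-unitary. If neither $[s_1,s_3]$ nor $[s_3,s_1]$ is an edge, then $(s_1,s_3^{s_2})$ is a two-way directed edge and $[s_3^{s_2},s_4^{s_2}]$, $[s_4^{s_2},s_5^{s_2}]$, $[s_5^{s_2},s_3^{s_2}]$ are directed edges.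
   Context: Transvections $s=1+u_s\otimes\phi_s$, i.e. $x\mapsto x+\phi_s(x)u_s$ with $\phi_s(u_s)=0$; $\mathcal T$ is the set of all transvections of $\mathrm{SL}(V)$. $\Gamma(\mathcal T)$: directed graph with an edge $[s,t]$ iff $\phi_t(u_s)\ne0$; it is two-way if $[t,s]$ is also an edge, one-way otherwise. $s^g=g^{-1}sg$. Weight $w(r_1,\dots,r_k)=\prod_{i=1}^k\phi_{r_{i+1}}(u_{r_i})$ (indices mod $k$); the tuple is unitary if $w(r_1,\dots,r_k)+(-1)^{k+1}w(r_k,\dots,r_1)^{\sqrt q}=0$, non-unitary otherwise. *)

(* Defs.v *)
From HB Require Import structures.
From mathcomp Require Import all_boot all_order all_algebra.
Set Implicit Arguments. Unset Strict Implicit. Unset Printing Implicit Defensive.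
Import GRing.Theory.
Local Open Scope ring_scope.

(* V = 'rV[F]_n (row vectors), linear maps act on the right: x |-> x *m g.
   A transvection s = 1 + u_s (x) phi_s is given by its data
   (u_s, phi_s) : 'rV_n * 'cV_n, with phi_s(x) = x *m phi_s. *)
Definition tdata (F : fieldType) (n : nat) := ('rV[F]_n * 'cV[F]_n)%type.

Definition tu (F : fieldType) (n : nat) (s : tdata F n) : 'rV[F]_n := s.1.
Definition tphi (F : fieldType) (n : nat) (s : tdata F n) : 'cV[F]_n := s.2.

Definition app (F : fieldType) (n : nat) (phi : 'cV[F]_n) (x : 'rV[F]_n) : F := (x *m phi) 0 0.

Definition is_transvection (F : fieldType) (n : nat) (s : tdata F n) : bool :=
  [&& tu s != 0, tphi s != 0 & app (tphi s) (tu s) == 0].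

Definition tmx (F : fieldType) (n : nat) (s : tdata F n) : 'M[F]_n := 1%:M + tphi s *m tu s.

(* data of the conjugate s^g = g^-1 s g : u_{s^g} = u_s g,
   phi_{s^g} = phi_s o g^-1 ; indeed tmx (tconj s g) = invmx g *m tmx s *m g *)
Definition tconj (F : fieldType) (n : nat) (s : tdata F n) (g : 'M[F]_n) : tdata F n :=
  (tu s *m g, invmx g *m tphi s).

Definition edge (F : fieldType) (n : nat) (s t : tdata F n) : bool := app (tphi t) (tu s) != 0.

Definition two_way (F : fieldType) (n : nat) (s t : tdata F n) : bool := edge s t && edge t s.
Definition one_way (F : fieldType) (n : nat) (s t : tdata F n) : bool := edge s t && ~~ edge t s.

Definition weight (F : fieldType) (n : nat) (rs : seq (tdata F n)) : F :=
  let k := size rs in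
  \prod_(i < k) app (tphi (nth (0, 0) rs ((i.+1) %% k))) (tu (nth (0, 0) rs i)).

(* unitary w.r.t. sq (= sqrt q) *)
Definition unitary (F : fieldType) (n : nat) (sq : nat) (rs : seq (tdata F n)) : bool :=
  weight rs + (-1) ^+ (size rs).+1 * (weight (rev rs)) ^+ sq == 0.

(* Main.v *)
Require Import Defs.
From HB Require Import structures.
From mathcomp Require Import all_boot all_order all_algebra.
Import GRing.Theory.
Local Open Scope ring_scope.
Set Implicit Arguments.

Lemma app_rank1 (F : fieldType) (n : nat) (x : 'rV[F]_n) (phi psi : 'cV[F]_n) (u : 'rV[F]_n) :
  app psi (x *m (phi *m u)) = app phi x * app psi u.
Proof.
by rewrite /app !mulmxA {1}(mx11_scalar (x *m phi)) mul_scalar_mx -scalemxAl mxE.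
Qed.

Lemma tmx_right (F : fieldType) (n : nat) (s : tdata F n) :
  is_transvection s -> tmx s *m (1%:M - tphi s *m tu s) = 1%:M.
Proof.
case/and3P=> _ _ /eqP h.
rewrite /tmx mulmxBr mulmx1 mulmxDl mul1mx.
rewrite mulmxA -(mulmxA (tphi s)) (mx11_scalar (tu s *m tphi s)).
rewrite [X in (_ *m X%:M)](_ : _ = 0) // mul_mx_scalar scale0r mul0mx.
by rewrite addr0 addrK.
Qed.

Lemma tmx_inv (F : fieldType) (n : nat) (s : tdata F n) :
  is_transvection s -> invmx (tmx s) = 1%:M - tphi s *m tu s.
Proof.
move=> hs; have e := tmx_right _ hs.
have [U _] := mulmx1_unit e.
by rewrite -{1}(mulKmx U (1%:M - tphi s *m tu s)) e mulmx1.
Qed.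

Lemma conj_app (F : fieldType) (n : nat) (s t g : tdata F n) :
  is_transvection g -> app (tphi (tconj t (tmx g))) (tu (tconj s (tmx g))) = app (tphi t) (tu s).
Proof.
move=> hg; rewrite /tconj /= /app mulmxA -(mulmxA (tu s)).
have [U _] := mulmx1_unit (tmx_right _ hg).
by rewrite mulmxV // mulmx1.
Qed.

Lemma weight3 (F : fieldType) (n : nat) (a b c : tdata F n) :
  weight [:: a; b; c] = app (tphi b) (tu a) * app (tphi c) (tu b) * app (tphi a) (tu c).
Proof. by rewrite /weight /= !big_ord_recr big_ord0 /= mul1r. Qed.

Lemma nonunit3 (F : fieldType) (n r : nat) (a b c : tdata F n) : (0 < r)%N ->
  app (tphi b) (tu a) != 0 -> app (tphi c) (tu b) != 0 -> app (tphi a) (tu c) != 0 ->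
  app (tphi b) (tu c) * app (tphi a) (tu b) * app (tphi c) (tu a) = 0 -> ~~ unitary r [:: a; b; c].
Proof.
move=> r0 h1 h2 h3 h4.
rewrite /unitary (_ : rev _ = [:: c; b; a]) // !weight3 h4 expr0n.
rewrite eqn0Ngt r0 /= mulr0 addr0 !mulf_neq0 //.
Qed.

Unset Implicit Arguments.

Theorem lemma4p10 (F : finFieldType) (r : nat) (n : nat)
  (hodd : odd #|F|) (hsq : #|F| = (r ^ 2)%N)
  (s1 s2 s3 s4 s5 : tdata F n)
  (h1 : is_transvection s1) (h2 : is_transvection s2) (h3 : is_transvection s3)
  (h4 : is_transvection s4) (h5 : is_transvection s5)
  (e12 : two_way s1 s2) (e23 : two_way s2 s3)
  (e34 : edge s3 s4) (e45 : edge s4 s5) (e53 : edge s5 s3)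
  (n13 : ~~ two_way s1 s3) :
  (one_way s1 s3 -> ~~ unitary r [:: s1; s3; s2]) /\
  (one_way s3 s1 -> ~~ unitary r [:: s1; s2; s3]) /\
  (~~ edge s1 s3 -> ~~ edge s3 s1 ->
     let g := tmx s2 in
     [/\ two_way s1 (tconj s3 g),
         edge (tconj s3 g) (tconj s4 g),
         edge (tconj s4 g) (tconj s5 g) &
         edge (tconj s5 g) (tconj s3 g)]).
Proof.
have r0 : (0 < r)%N.
  case: r hsq => // h; have : (0 < #|F|)%N by apply/card_gt0P; exists 0.
  by rewrite h.
case/andP: e12 => e12 e21; case/andP: e23 => e23 e32.
split; [|split].
- case/andP=> e13 /negbNE /eqP n31.
  apply: nonunit3 => //; by rewrite n31 !(mul0r, mulr0).
- case/andP=> e31 /negbNE /eqP n13'.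
  apply: nonunit3 => //; by rewrite n13' !(mul0r, mulr0).
move=> /negbNE /eqP n13' /negbNE /eqP n31 g.
rewrite /two_way /edge !conj_app // -!/(edge _ _) e34 e45 e53 /=.
have Aa : forall (M : 'M[F]_n) (phi : 'cV[F]_n) (x : 'rV[F]_n), app (M *m phi) x = app phi (x *m M).
  by move=> M phi x; rewrite /app mulmxA.
have L1 : forall (x : 'rV[F]_n) (P : 'M[F]_n), x *m (1%:M - P) = x - x *m P.
  by move=> x P; rewrite mulmxBr mulmx1.
have L2 : forall (x : 'rV[F]_n) (P : 'M[F]_n), x *m (1%:M + P) = x + x *m P.
  by move=> x P; rewrite mulmxDr mulmx1.
have AD : forall phi (x y : 'rV[F]_n), app phi (x + y) = app phi x + app phi y.
  by move=> phi x y; rewrite /app mulmxDl mxE.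
have AN : forall phi (x : 'rV[F]_n), app phi (- x) = - app phi x.
  by move=> phi x; rewrite /app mulNmx mxE.
rewrite /edge /tconj /= /g tmx_inv // Aa L1 /tmx L2 AD AN !app_rank1 n13' AD app_rank1 n31.
by rewrite sub0r oppr_eq0 add0r !mulf_neq0.
Qed.
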